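(* Let $u=p_1(t)e^{-|x-q_1(t)|}+p_2(t)e^{-|x-q_2(t)|}$ be a 2-peakon solution of the Camassa-Holm equation, i.e. $(q,p)$ solves $\dot q_i=\partial H/\partial p_i$, $\dot p_i=-\partial H/\partial q_i$, $H=\frac12\sum_{i,j=1}^2p_ip_je^{-|q_i-q_j|}$, with $q_1(0)>q_2(0)$ and energy $H_1:=p_1^2+p_2^2+2p_1p_2e^{-|q_1-q_2|}=c>0$. Then the two peakons collide (i.e. $q_1(t)-q_2(t)\to0$ at some finite time) if and only if the momentum $H_0=p_1+p_2$ satisfies $|H_0|<\sqrt c$ and $p_1-p_2<0$ at $t=0$. Equivalently, if and only if $p_1<0$ and $p_2>0$ at $t=0$. *)

(* Defs.v *)
From Stdlib Require Import Reals.
From Coquelicot Require Import Coquelicot.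
Open Scope R_scope.

Definition sgn (x : R) : R := if Rlt_dec 0 x then 1 else if Rlt_dec x 0 then -1 else 0.

Definition H2 (q1 q2 p1 p2 : R) : R :=
  / 2 * (p1 * p1 + p2 * p2 + 2 * p1 * p2 * exp (- Rabs (q1 - q2))).

(* Its partial derivatives (written out; valid for q1 <> q2) *)
Definition dH_dp1 (q1 q2 p1 p2 : R) : R := p1 + p2 * exp (- Rabs (q1 - q2)).
Definition dH_dp2 (q1 q2 p1 p2 : R) : R := p2 + p1 * exp (- Rabs (q1 - q2)).
Definition dH_dq1 (q1 q2 p1 p2 : R) : R :=
  - (p1 * p2 * sgn (q1 - q2) * exp (- Rabs (q1 - q2))).
Definition dH_dq2 (q1 q2 p1 p2 : R) : R :=
  p1 * p2 * sgn (q1 - q2) * exp (- Rabs (q1 - q2)).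

Definition peakon_solution_on (T : R) (q1 q2 p1 p2 : R -> R) : Prop :=
  forall t, 0 <= t < T ->
    is_derive q1 t (dH_dp1 (q1 t) (q2 t) (p1 t) (p2 t)) /\
    is_derive q2 t (dH_dp2 (q1 t) (q2 t) (p1 t) (p2 t)) /\
    is_derive p1 t (- dH_dq1 (q1 t) (q2 t) (p1 t) (p2 t)) /\
    is_derive p2 t (- dH_dq2 (q1 t) (q2 t) (p1 t) (p2 t)).

Definition collide (a1 a2 b1 b2 : R) : Prop :=
  exists (T : R) (q1 q2 p1 p2 : R -> R),
    0 < T /\
    q1 0 = a1 /\ q2 0 = a2 /\ p1 0 = b1 /\ p2 0 = b2 /\
    peakon_solution_on T q1 q2 p1 p2 /\
    (forall t, 0 <= t < T -> q2 t < q1 t) /\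
    filterlim (fun t => q1 t - q2 t) (at_left T) (locally 0).

(* Main.v *)
Require Import Defs.
From Stdlib Require Import Reals.
From Coquelicot Require Import Coquelicot.
Open Scope R_scope.
From Stdlib Require Import Lra Ranalysis5.

Lemma derive_cont f t l : is_derive f t l -> continuity_pt f t.
Proof. intro H. apply continuity_pt_filterlim. apply (ex_derive_continuous (V:=R_NormedModule)). exists l; exact H. Qed.

Lemma incr_on (f df : R -> R) T :
  (forall t, 0 <= t < T -> is_derive f t (df t)) ->
  (forall t, 0 <= t < T -> 0 <= df t) ->
  forall t, 0 <= t < T -> f 0 <= f t.
Proof.
  intros Hd Hp t Ht.
  destruct (Req_dec t 0) as [->|Hn]; [lra|].
  destruct (MVT_gen f 0 t df) as [c [Hc Heq]].
  - intros x Hx. rewrite Rmin_left in Hx; [|lra]. rewrite Rmax_right in Hx; [|lra].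
    apply Hd; lra.
  - intros x Hx. rewrite Rmin_left in Hx; [|lra]. rewrite Rmax_right in Hx; [|lra].
    apply (derive_cont _ _ (df x)). apply Hd; lra.
  - rewrite Rmin_left in Hc; [|lra]. rewrite Rmax_right in Hc; [|lra].
    assert (0 <= df c) by (apply Hp; lra). nra.
Qed.

Lemma const_on (f : R -> R) T :
  (forall t, 0 <= t < T -> is_derive f t 0) ->
  forall t, 0 <= t < T -> f t = f 0.
Proof.
  intros Hd t Ht.
  assert (A := incr_on f (fun _ => 0) T Hd (fun _ _ => Rle_refl 0) t Ht).
  assert (B := incr_on (fun t => - f t) (fun _ => 0) T).
  assert (B' : - f 0 <= - f t).
  { apply B; [|intros; lra|exact Ht]. intros s Hs.
    replace 0 with (- 0) by ring. exact (is_derive_opp f s 0 (Hd s Hs)). }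
  lra.
Qed.

Lemma no_lim (d : R -> R) T m : 0 < T -> 0 < m ->
  (forall t, 0 <= t < T -> m <= d t) ->
  filterlim d (at_left T) (locally 0) -> False.
Proof.
  intros HT Hm Hb Hl.
  apply filterlim_locally with (eps := mkposreal m Hm) in Hl.
  destruct Hl as [del Hdel].
  set (t := Rmax 0 (T - del/2)).
  assert (Hdp := cond_pos del).
  assert (Ht : 0 <= t < T). { unfold t. split. apply Rmax_l. apply Rmax_lub_lt; lra. }
  assert (Hb' := Hb t Ht).
  assert (Hball : ball T del t).
  { apply (ball_sym). unfold ball; simpl; unfold AbsRing_ball, abs, minus, plus, opp; simpl.
    unfold t. destruct (Rle_dec 0 (T - del/2)).
    rewrite Rmax_right by lra. apply Rabs_def1; lra.
    rewrite Rmax_left by lra. apply Rabs_def1; lra. }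
  specialize (Hdel t Hball (proj2 Ht)).
  unfold ball in Hdel; simpl in Hdel; unfold AbsRing_ball, abs, minus, plus, opp in Hdel; simpl in Hdel.
  apply Rabs_def2 in Hdel. simpl in Hdel. lra.
Qed.
Lemma sgn_pos x : 0 < x -> sgn x = 1.
Proof. intro. unfold sgn. destruct (Rlt_dec 0 x); lra. Qed.

Lemma is_derive_eq (f : R -> R) x l l' : is_derive f x l -> l = l' -> is_derive f x l'.
Proof. intros H ->; exact H. Qed.

Section S.
Variables (T : R) (q1 q2 p1 p2 : R -> R).
Hypothesis Hsol : peakon_solution_on T q1 q2 p1 p2.
Hypothesis Hord : forall t, 0 <= t < T -> q2 t < q1 t.
Let E t := exp (- (q1 t - q2 t)).

Lemma ders t : 0 <= t < T ->
  is_derive q1 t (p1 t + p2 t * E t) /\ is_derive q2 t (p2 t + p1 t * E t) /\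
  is_derive p1 t (p1 t * p2 t * E t) /\ is_derive p2 t (- (p1 t * p2 t * E t)).
Proof.
  intro Ht. destruct (Hsol t Ht) as [A [B [C D]]].
  assert (Hp := Hord t Ht).
  unfold dH_dp1, dH_dp2, dH_dq1, dH_dq2 in *.
  rewrite Rabs_right in A, B, C, D by lra.
  rewrite sgn_pos in C, D by lra.
  unfold E. split; [|split; [|split]].
  - exact A.
  - exact B.
  - replace (p1 t * p2 t * exp (- (q1 t - q2 t))) with (- - (p1 t * p2 t * 1 * exp (- (q1 t - q2 t)))) by ring. exact C.
  - replace (- (p1 t * p2 t * exp (- (q1 t - q2 t)))) with (- (p1 t * p2 t * 1 * exp (- (q1 t - q2 t)))) by ring. exact D.
Qed.

Lemma G_const t : 0 <= t < T -> p1 t * p2 t * (1 - E t) = p1 0 * p2 0 * (1 - E 0).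
Proof.
  apply (const_on (fun t => p1 t * p2 t * (1 - E t)) T).
  intros s Hs. destruct (ders s Hs) as [A [B [C D]]].
  unfold E in *.
  auto_derive.
  - repeat split; eexists; eassumption.
  - replace (Derive (fun x => p1 x) s) with (p1 s * p2 s * exp (- (q1 s - q2 s))) by (symmetry; now apply is_derive_unique).
    replace (Derive (fun x => p2 x) s) with (- (p1 s * p2 s * exp (- (q1 s - q2 s)))) by (symmetry; now apply is_derive_unique).
    replace (Derive (fun x => q1 x) s) with (p1 s + p2 s * exp (- (q1 s - q2 s))) by (symmetry; now apply is_derive_unique).
    replace (Derive (fun x => q2 x) s) with (p2 s + p1 s * exp (- (q1 s - q2 s))) by (symmetry; now apply is_derive_unique).
    change (q1 s + - q2 s) with (q1 s - q2 s). ring.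
Qed.

Lemma P_const t : 0 <= t < T -> p1 t + p2 t = p1 0 + p2 0.
Proof.
  apply (const_on (fun t => p1 t + p2 t) T).
  intros s Hs. destruct (ders s Hs) as [A [B [C D]]].
  eapply is_derive_eq. apply (is_derive_plus p1 p2 s _ _ C D). simpl. unfold plus; simpl. ring.
Qed.

Lemma d_der t : 0 <= t < T -> is_derive (fun t => q1 t - q2 t) t ((p1 t - p2 t) * (1 - E t)).
Proof.
  intros Hs. destruct (ders t Hs) as [A [B [C D]]].
  eapply is_derive_eq. apply (is_derive_minus q1 q2 t _ _ A B). unfold minus, plus, opp; simpl. ring.
Qed.
End S.

Lemma collide_signs a1 a2 b1 b2 : a2 < a1 -> collide a1 a2 b1 b2 -> b1 < 0 /\ 0 < b2.
Proof.
  intros Ha [T [q1 [q2 [p1 [p2 [HT [e1 [e2 [e3 [e4 [Hsol [Hord Hlim]]]]]]]]]]]].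
  set (E := fun t => exp (- (q1 t - q2 t))).
  set (K := b1 * b2 * (1 - E 0)).
  assert (HE0 : E 0 = exp (- (a1 - a2))) by (unfold E; now rewrite e1, e2).
  assert (HEb : forall t, 0 <= t < T -> 0 < E t < 1).
  { intros t Ht. assert (H := Hord t Ht). unfold E. split. apply exp_pos.
    rewrite <- exp_0. apply exp_increasing. lra. }
  assert (Hdb : forall t, 0 <= t < T -> 1 - E t <= q1 t - q2 t).
  { intros t Ht. unfold E. assert (H := exp_ineq1_le (- (q1 t - q2 t))). lra. }
  assert (HG : forall t, 0 <= t < T -> p1 t * p2 t * (1 - E t) = K).
  { intros t Ht. unfold K. rewrite <- e3, <- e4. exact (G_const T q1 q2 p1 p2 Hsol Hord t Ht). }
  assert (HP : forall t, 0 <= t < T -> p1 t + p2 t = b1 + b2).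
  { intros t Ht. rewrite <- e3, <- e4. exact (P_const T q1 q2 p1 p2 Hsol Hord t Ht). }
  assert (H0T : 0 <= 0 < T) by lra.
  destruct (HEb 0 H0T) as [HE0a HE0b].
  assert (HK : 0 < 1 - E 0) by lra.
  destruct (total_order_T (b1 * b2) 0) as [[Hk|Hk]|Hk].
  3: { exfalso.
    assert (Kp : 0 < K) by (unfold K; nra).
    assert (Pp : 0 < (b1 + b2) * (b1 + b2)) by nra.
    apply (no_lim (fun t => q1 t - q2 t) T (4 * K / ((b1 + b2) * (b1 + b2))) HT).
    - apply Rdiv_lt_0_compat; lra.
    - intros t Ht. apply Rle_trans with (1 - E t); [|now apply Hdb].
      assert (H1 := HG t Ht). assert (H2 := HP t Ht). assert (H3 := HEb t Ht).
      assert (H4 : 4 * K <= (1 - E t) * ((b1 + b2) * (b1 + b2))).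
      { rewrite <- H2, <- H1. assert (0 <= (1 - E t) * ((p1 t - p2 t) * (p1 t - p2 t))) by (apply Rmult_le_pos; [lra|apply Rle_0_sqr]). lra. }
      apply Rmult_le_reg_r with ((b1 + b2) * (b1 + b2)); [lra|].
      unfold Rdiv. rewrite Rmult_assoc, Rinv_l by lra. lra.
    - exact Hlim. }
  { destruct (Rlt_dec b1 0) as [Hb1|Hb1]. { split; [lra| nra]. } exfalso.
    assert (Hb1' : 0 < b1) by (destruct (Req_dec b1 0) as [h|h]; [subst; nra | lra]).
    assert (Kn : K < 0) by (unfold K; nra).
    assert (Hp1 : forall t, 0 <= t < T -> 0 < p1 t).
    { intros t Ht. destruct (Rlt_dec 0 (p1 t)) as [h|h]; [exact h|exfalso].
      assert (Hne : p1 t <> 0) by (intro h0; assert (H1 := HG t Ht); rewrite h0 in H1; lra).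
      assert (Htp : 0 < t) by (destruct (Req_dec t 0) as [h0|h0]; [rewrite h0, e3 in h; lra | lra]).
      destruct (IVT_interv (fun s => - p1 s) 0 t) as [z [Hz1 Hz2]].
      + intros a Ha'. destruct (ders T q1 q2 p1 p2 Hsol Hord a ltac:(lra)) as [A [B [C D]]].
        apply (derive_cont _ _ _ (is_derive_opp p1 a _ C)).
      + lra.
      + simpl. lra.
      + simpl. lra.
      + assert (H1 := HG z ltac:(lra)). assert (p1 z = 0) by lra. rewrite H in H1. lra. }
    apply (no_lim (fun t => q1 t - q2 t) T (a1 - a2) HT); [lra| |exact Hlim].
    intros t Ht.
    assert (Hi := incr_on (fun t => q1 t - q2 t) (fun t => (p1 t - p2 t) * (1 - E t)) T
      (d_der T q1 q2 p1 p2 Hsol Hord)).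
    simpl in Hi. rewrite e1, e2 in Hi. apply Hi; [|exact Ht].
    intros s Hs. assert (H1 := HG s Hs). assert (H2 := Hp1 s Hs). assert (H3 := HEb s Hs).
    assert (0 < p1 s * (1 - E s)) by (apply Rmult_lt_0_compat; lra).
    assert (p2 s < 0) by nra. apply Rmult_le_pos; lra. }
  { exfalso.
    assert (HK0 : K = 0) by (unfold K; rewrite Hk; ring).
    assert (Hpp : forall t, 0 <= t < T -> p1 t * p2 t = 0).
    { intros t Ht. assert (H1 := HG t Ht). assert (H3 := HEb t Ht).
      rewrite HK0 in H1. apply Rmult_integral in H1. destruct H1; [assumption|lra]. }
    assert (Hc1 : forall t, 0 <= t < T -> p1 t = b1).
    { intros t Ht. rewrite <- e3. apply (const_on p1 T); [|exact Ht].
      intros s Hs. destruct (ders T q1 q2 p1 p2 Hsol Hord s Hs) as [A [B [C D]]].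
      eapply is_derive_eq. exact C. rewrite (Hpp s Hs). apply Rmult_0_l. }
    assert (Hc2 : forall t, 0 <= t < T -> p2 t = b2).
    { intros t Ht. rewrite <- e4. apply (const_on p2 T); [|exact Ht].
      intros s Hs. destruct (ders T q1 q2 p1 p2 Hsol Hord s Hs) as [A [B [C D]]].
      eapply is_derive_eq. exact D. rewrite (Hpp s Hs). rewrite Rmult_0_l. apply Ropp_0. }
    set (M := Rabs (b1 - b2)).
    assert (HM : 0 <= M) by apply Rabs_pos.
    assert (HMb : - M <= b1 - b2) by (unfold M; assert (h := Rabs_maj2 (b1 - b2)); lra).
    assert (Hx : forall t, is_derive (fun t => exp (M * t)) t (M * exp (M * t))).
    { intros t. auto_derive; [auto|ring]. }
    assert (Hi := incr_on (fun t => (q1 t - q2 t) * exp (M * t))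
      (fun t => (b1 - b2) * (1 - E t) * exp (M * t) + (q1 t - q2 t) * (M * exp (M * t))) T).
    simpl in Hi. rewrite e1, e2, Rmult_0_r, exp_0, Rmult_1_r in Hi.
    apply (no_lim (fun t => q1 t - q2 t) T ((a1 - a2) / exp (M * T)) HT); [apply Rdiv_lt_0_compat; [lra|apply exp_pos]| |exact Hlim].
    intros t Ht.
    assert (G1 : a1 - a2 <= (q1 t - q2 t) * exp (M * t)).
    { apply Hi; [|intros s Hs|exact Ht].
      - intros s Hs. eapply is_derive_eq.
        apply (is_derive_mult (fun t => q1 t - q2 t) (fun t => exp (M * t)) s _ _ (d_der T q1 q2 p1 p2 Hsol Hord s Hs) (Hx s)).
        intros; apply Rmult_comm.
        unfold plus, mult; simpl. rewrite (Hc1 s Hs), (Hc2 s Hs). reflexivity.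
      - assert (H3 := HEb s Hs). assert (H4 := Hdb s Hs). assert (H5 := exp_pos (M * s)).
        assert (0 <= (b1 - b2) * (1 - E s) + (q1 s - q2 s) * M) by nra.
        replace ((b1 - b2) * (1 - E s) * exp (M * s) + (q1 s - q2 s) * (M * exp (M * s)))
          with (((b1 - b2) * (1 - E s) + (q1 s - q2 s) * M) * exp (M * s)) by ring.
        apply Rmult_le_pos; lra. }
    assert (G2 : exp (M * t) <= exp (M * T)).
    { destruct (Req_dec (M * t) (M * T)) as [h|h]. rewrite h; lra.
      left. apply exp_increasing. assert (M * t <= M * T) by (apply Rmult_le_compat_l; lra). lra. }
    assert (G3 := Hord t Ht).
    assert (G4 : a1 - a2 <= (q1 t - q2 t) * exp (M * T)) by nra.
    assert (G5 := exp_pos (M * T)).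
    apply Rmult_le_reg_r with (exp (M * T)); [lra|].
    unfold Rdiv. rewrite Rmult_assoc, Rinv_l by lra. lra. }
Qed.
Section Sol.
Variables (u v C a1 : R).
Hypotheses (Hu : 0 < u) (Hv : v < 0) (HC : 1 < C).
Definition Xf t := C * exp (- ((u - v) * t)).
Definition P1 t := (u - v * Xf t) / (1 - Xf t).
Definition P2 t := (v - u * Xf t) / (1 - Xf t).
Definition Ef t := (u - v) * (u - v) * Xf t / ((u - v * Xf t) * (u * Xf t - v)).
Definition Q1 t := a1 + u * t + ln ((u - v * Xf t) / (u - v * C)).
Definition Q2 t := Q1 t + ln (Ef t).

Ltac fin := match goal with |- ?a = ?b => change (@eq R a b) end; field;
  repeat split; nra.

Section At.
Variable t : R.
Hypothesis HX : 1 < Xf t.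
Let HX' : 1 < C * exp (- ((u - v) * t)) := HX.
Lemma p1_der : is_derive P1 t (P1 t * P2 t * Ef t).
Proof.
  unfold P1, P2, Ef, Xf in *. auto_derive; [nra|fin].
Qed.
Lemma p2_der : is_derive P2 t (- (P1 t * P2 t * Ef t)).
Proof.
  unfold P1, P2, Ef, Xf in *. auto_derive; [nra|fin].
Qed.
Lemma q1_der : is_derive Q1 t (P1 t + P2 t * Ef t).
Proof.
  unfold Q1, P1, P2, Ef, Xf in *. auto_derive.
  - apply Rmult_lt_0_compat; [nra|apply Rinv_0_lt_compat; nra].
  - fin.
Qed.
Lemma q2_der : is_derive Q2 t (P2 t + P1 t * Ef t).
Proof.
  unfold Q2, Q1, P1, P2, Ef, Xf in *. auto_derive.
  - assert (A1 : 0 < u + - (v * (C * exp (- ((u - v) * t))))) by nra.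
    assert (A2 : 0 < u * (C * exp (- ((u - v) * t))) + - v) by nra.
    assert (A3 : 0 < (u - v) * (u - v)) by nra.
    split; [|split; [|split; [|auto]]].
    + apply Rmult_lt_0_compat; [nra|apply Rinv_0_lt_compat; nra].
    + apply Rgt_not_eq, Rmult_lt_0_compat; lra.
    + apply Rmult_lt_0_compat; [apply Rmult_lt_0_compat; lra|apply Rinv_0_lt_compat, Rmult_lt_0_compat; lra].
  - fin.
Qed.
End At.

Lemma Ef_bounds t : 1 < Xf t -> 0 < Ef t < 1.
Proof.
  intro HX. unfold Ef.
  assert (A1 : 0 < u - v * Xf t) by nra.
  assert (A2 : 0 < u * Xf t - v) by nra.
  assert (A3 : 0 < (u - v) * (u - v)) by nra.
  assert (A4 : 0 < (u - v * Xf t) * (u * Xf t - v)) by nra.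
  split.
  - apply Rdiv_lt_0_compat; nra.
  - apply Rmult_lt_reg_r with ((u - v * Xf t) * (u * Xf t - v)); [lra|].
    unfold Rdiv. rewrite Rmult_assoc, Rinv_l by lra.
    assert (0 < - (u * v) * ((Xf t - 1) * (Xf t - 1))) by (apply Rmult_lt_0_compat; nra). nra.
Qed.

Lemma construct : collide a1 (Q2 0) (P1 0) (P2 0).
Proof.
  set (T := ln C / (u - v)).
  assert (Hs : 0 < u - v) by lra.
  assert (HlnC : 0 < ln C) by (rewrite <- ln_1; apply ln_increasing; lra).
  assert (HT : 0 < T) by (apply Rdiv_lt_0_compat; lra).
  assert (HXt : forall t, 0 <= t < T -> 1 < Xf t).
  { intros t Ht. unfold Xf.
    assert (h : (u - v) * t < ln C).
    { unfold T in Ht. destruct Ht as [_ Ht]. apply Rmult_lt_compat_l with (r := u - v) in Ht; [|lra].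
      replace ((u - v) * (ln C / (u - v))) with (ln C) in Ht by (field; lra). exact Ht. }
    assert (h2 : exp (- ln C) < exp (- ((u - v) * t))) by (apply exp_increasing; lra).
    rewrite exp_Ropp, exp_ln in h2 by lra.
    apply Rmult_lt_compat_l with (r := C) in h2; [|lra]. rewrite Rinv_r in h2; lra. }
  assert (Hord : forall t, 0 <= t < T -> 0 < Q1 t - Q2 t).
  { intros t Ht. destruct (Ef_bounds t (HXt t Ht)) as [e1 e2].
    unfold Q2. assert (ln (Ef t) < 0) by (rewrite <- ln_1; apply ln_increasing; lra). lra. }
  exists T, Q1, Q2, P1, P2. split; [exact HT|].
  split. { unfold Q1, Xf. rewrite !Rmult_0_r, Ropp_0, exp_0, Rmult_1_r, Rplus_0_r.
    unfold Rdiv. rewrite Rinv_r by nra. rewrite ln_1. ring. }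
  split; [reflexivity|]. split; [reflexivity|]. split; [reflexivity|].
  split.
  { intros t Ht. assert (HX := HXt t Ht). assert (Ho := Hord t Ht).
    assert (HE : exp (- Rabs (Q1 t - Q2 t)) = Ef t).
    { rewrite Rabs_right by lra. unfold Q2. destruct (Ef_bounds t HX).
      replace (- (Q1 t - (Q1 t + ln (Ef t)))) with (ln (Ef t)) by ring. apply exp_ln; lra. }
    unfold dH_dp1, dH_dp2, dH_dq1, dH_dq2. rewrite HE. rewrite sgn_pos by lra.
    split; [|split; [|split]].
    - apply q1_der; exact HX.
    - apply q2_der; exact HX.
    - eapply is_derive_eq. apply p1_der; exact HX. match goal with |- ?a = ?b => change (@eq R a b) end; ring.
    - eapply is_derive_eq. apply p2_der; exact HX. match goal with |- ?a = ?b => change (@eq R a b) end; ring. }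
  split. { intros t Ht. specialize (Hord t Ht). lra. }
  assert (HXT : Xf T = 1).
  { unfold Xf, T. replace ((u - v) * (ln C / (u - v))) with (ln C) by (field; lra).
    rewrite exp_Ropp, exp_ln by lra. apply Rinv_r; lra. }
  assert (HET : Ef T = 1).
  { unfold Ef. rewrite HXT. field. all: repeat split; nra. }
  apply filterlim_ext with (f := fun t => - ln (Ef t)).
  { intro t. unfold Q2. ring. }
  apply (filterlim_filter_le_1 (F := locally T)).
  { apply filter_le_within. }
  replace 0 with (- ln (Ef T)) by (rewrite HET, ln_1; ring).
  apply (ex_derive_continuous (V:=R_NormedModule) (fun t => - ln (Ef t)) T).
  assert (HXT' := HXT). unfold Xf in HXT'.
  unfold Ef, Xf. auto_derive. rewrite HXT'.
  replace (u + - (v * 1)) with (u - v) by ring. replace (u * 1 + - v) with (u - v) by ring.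
  split; [apply Rgt_not_eq, Rmult_lt_0_compat; lra|split; [|auto]].
  rewrite Rmult_1_r. apply Rmult_lt_0_compat; [nra|apply Rinv_0_lt_compat; nra].
Qed.
End Sol.

Lemma collide_of_signs a1 a2 b1 b2 : a2 < a1 -> b1 < 0 -> 0 < b2 -> collide a1 a2 b1 b2.
Proof.
  intros Ha Hb1 Hb2.
  set (E0 := exp (- (a1 - a2))).
  assert (HE0 : 0 < E0 < 1).
  { unfold E0. split. apply exp_pos. rewrite <- exp_0. apply exp_increasing. lra. }
  set (K := b1 * b2 * (1 - E0)).
  assert (HK : K < 0).
  { unfold K. assert (b1 * b2 < 0) by nra. nra. }
  set (D := (b1 + b2) * (b1 + b2) - 4 * K).
  assert (HD : 0 < D) by (unfold D; pose proof (Rle_0_sqr (b1 + b2)) as hh; unfold Rsqr in hh; lra).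
  set (s := sqrt D).
  assert (Hss : s * s = D) by (apply sqrt_sqrt; lra).
  assert (Hs : 0 < s) by (apply sqrt_lt_R0; lra).
  set (u := (b1 + b2 + s) / 2). set (v := (b1 + b2 - s) / 2).
  assert (Huv : u * v = K).
  { unfold u, v. replace ((b1 + b2 + s) / 2 * ((b1 + b2 - s) / 2)) with (((b1 + b2) * (b1 + b2) - s * s) / 4) by field.
    rewrite Hss. unfold D. field. }
  assert (Hu : 0 < u) by (unfold u, v in *; nra).
  assert (Hv : v < 0) by (unfold u, v in *; nra).
  assert (Hsb : s < b2 - b1).
  { destruct (Rlt_dec s (b2 - b1)) as [h|h]; [exact h|exfalso].
    assert (hb : b1 * b2 < 0) by nra. assert (hh : (b1 * b2) * E0 < 0) by nra.
    assert (D < (b2 - b1) * (b2 - b1)) by (unfold D, K; nra).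
    nra. }
  assert (Hbv : b1 - v < 0) by (unfold v; lra).
  set (C := (b1 - u) / (b1 - v)).
  assert (HC : 1 < C).
  { unfold C. apply Rmult_lt_reg_r with (- (b1 - v)); [lra|].
    unfold Rdiv. replace ((b1 - u) * / (b1 - v) * - (b1 - v)) with (- (b1 - u)) by (field; lra).
    unfold u, v; lra. }
  assert (Hb2e : b2 = u + v - b1) by (unfold u, v; field).
  assert (HX0 : Xf u v C 0 = C) by (unfold Xf; rewrite Rmult_0_r, Ropp_0, exp_0; ring).
  assert (e3 : P1 u v C 0 = b1).
  { unfold P1. rewrite HX0. unfold C. field. split; lra. }
  assert (e4 : P2 u v C 0 = b2).
  { unfold P2. rewrite HX0. unfold C. rewrite Hb2e. field. split; lra. }
  assert (e2 : Q2 u v C a1 0 = a2).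
  { unfold Q2. 
    assert (HQ1 : Q1 u v C a1 0 = a1).
    { unfold Q1. rewrite HX0, Rmult_0_r, Rplus_0_r. unfold Rdiv. rewrite Rinv_r by nra. rewrite ln_1. ring. }
    assert (HEf : Ef u v C 0 = E0).
    { unfold Ef. rewrite HX0.
      assert (HE0' : E0 = 1 - u * v / (b1 * b2)) by (rewrite Huv; unfold K; field; lra).
      rewrite HE0', Hb2e. unfold C. field.
      split; [lra|split; [lra|split; [lra|split]]].
      + replace (u * (b1 - u) - v * (b1 - v)) with ((u - v) * (b1 - u - v)) by ring.
        apply Rmult_integral_contrapositive; split; lra.
      + replace (u * (b1 - v) - v * (b1 - u)) with ((u - v) * b1) by ring.
        apply Rmult_integral_contrapositive; split; lra. }
    rewrite HQ1, HEf. unfold E0. rewrite ln_exp. ring. }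
  rewrite <- e2, <- e3, <- e4.
  exact (construct u v C a1 Hu Hv HC).
Qed.

Lemma sign_equiv a1 a2 b1 b2 c :
  a2 < a1 ->
  b1 ^ 2 + b2 ^ 2 + 2 * b1 * b2 * exp (- Rabs (a1 - a2)) = c ->
  0 < c ->
  ((Rabs (b1 + b2) < sqrt c /\ b1 - b2 < 0) <-> (b1 < 0 /\ 0 < b2)).
Proof.
  intros Ha Hc Hcp.
  rewrite Rabs_right in Hc by lra.
  set (E0 := exp (- (a1 - a2))) in *.
  assert (HE0 : 0 < E0 < 1).
  { unfold E0. split. apply exp_pos. rewrite <- exp_0. apply exp_increasing. lra. }
  assert (Hid : (b1 + b2) * (b1 + b2) - c = 2 * (b1 * b2) * (1 - E0)) by (rewrite <- Hc; ring).
  assert (Hsc : sqrt c * sqrt c = c) by (apply sqrt_sqrt; lra).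
  assert (Hsp : 0 <= sqrt c) by apply sqrt_pos.
  split.
  - intros [H1 H2].
    assert (Hab := Rabs_pos (b1 + b2)).
    assert (H3 : Rabs (b1 + b2) * Rabs (b1 + b2) < c) by nra.
    rewrite <- Rabs_mult, Rabs_right in H3 by (pose proof (Rle_0_sqr (b1 + b2)) as hh; unfold Rsqr in hh; lra).
    assert (H4 : (b1 * b2) * (1 - E0) < 0) by lra.
    assert (H5 : b1 * b2 < 0).
    { destruct (Rlt_dec (b1 * b2) 0) as [h|h]; [exact h|]. exfalso.
      assert (0 <= (b1 * b2) * (1 - E0)) by (apply Rmult_le_pos; lra). lra. }
    split; nra.
  - intros [H1 H2]. split; [|lra].
    rewrite <- sqrt_Rsqr_abs. apply sqrt_lt_1; [apply Rle_0_sqr|lra|].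
    unfold Rsqr. assert (b1 * b2 < 0) by nra.
    assert ((b1 * b2) * (1 - E0) < 0) by (apply Rmult_neg_pos; lra) || nra.
    lra.
Qed.

Theorem theorem3 (a1 a2 b1 b2 c : R) :
  a2 < a1 ->
  b1 ^ 2 + b2 ^ 2 + 2 * b1 * b2 * exp (- Rabs (a1 - a2)) = c ->
  0 < c ->
  (collide a1 a2 b1 b2 <-> (Rabs (b1 + b2) < sqrt c /\ b1 - b2 < 0)) /\
  (collide a1 a2 b1 b2 <-> (b1 < 0 /\ 0 < b2)).
Proof.
  intros Ha Hc Hcp.
  assert (Main : collide a1 a2 b1 b2 <-> (b1 < 0 /\ 0 < b2)).
  { split. apply collide_signs; exact Ha. intros [h1 h2]. apply collide_of_signs; assumption. }
  split; [|exact Main].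
  rewrite (sign_equiv a1 a2 b1 b2 c Ha Hc Hcp). exact Main.
Qed.
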